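(* Let $K\subseteq\mathcal I_{int}$ be finite and let $A=(Q,\mathsf{init},2^{\Sigma\cup K\cup\{\mathsf{anch}\}},\delta,F)$ be an NFA whose language $L(A)$ consists of collapsed $K$-interval words over $\Sigma$. Then for every type $\mathsf{seq}$ over $K$, $L(A_{\mathsf{seq}})=\mathsf{Norm}(L(A)\cap W_{\mathsf{seq}})$. Consequently $\bigcup_{\mathsf{seq}}L(A_{\mathsf{seq}})=\mathsf{Norm}(L(A))$, the union ranging over all types over $K$.
   Context: Fix a finite set $\Sigma$ of propositions; $\mathcal I_{int}$ is the set of open, half-open or closed real intervals with endpoints in $\mathbb Z\cup\{-\infty,\infty\}$. Interval words: for finite $K\subseteq\mathcal I_{int}$ and a fresh symbol $\mathsf{anch}$, a $K$-interval word over $\Sigma$ is a finite word $w=a_1\cdots a_n$ with $a_j\subseteq\Sigma\cup K\cup\{\mathsf{anch}\}$ such that exactly one position $i$, denoted $\mathsf{anch}(w)$, has $\mathsf{anch}\in a_i$, and $a_i\subseteq\Sigma\cup\{\mathsf{anch}\}$ there. Position $j$ is $I$-time restricted iff $I\in a_j$. $w$ is collapsed iff every $a_j$ contains at most one element of $K$. $\mathsf{first}(w,I)$, $\mathsf{last}(w,I)$ are the least and greatest $I$-time restricted positions ($\bot$ if none). For a collapsed $K$-interval word $w$, $\mathsf{Norm}(w)$ is the $K$-interval word $b_1\cdots b_n$ with $b_j\cap(\Sigma\cup\{\mathsf{anch}\})=a_j\cap(\Sigma\cup\{\mathsf{anch}\})$ and, for $I\in K$, $I\in b_j$ iff $j\in\{\mathsf{first}(w,I),\mathsf{last}(w,I)\}$;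 for a set $L$ of words, $\mathsf{Norm}(L)=\{\mathsf{Norm}(w):w\in L\}$. Types: for a collapsed $K$-interval word $w$, let $\mathsf{Boundary}(w)$ be the set of positions that are $\mathsf{anch}(w)$ or equal to $\mathsf{first}(w,I)$ or $\mathsf{last}(w,I)$ for some $I\in K$; listing them as $p_1<\dots<p_m$, the type of $w$ is the word $c_1\cdots c_m$ over $K\cup\{\mathsf{anch}\}$ where $c_k$ is the unique element of $a_{p_k}\setminus\Sigma$. A type over $K$ is any word over $K\cup\{\mathsf{anch}\}$ arising this way (it contains $\mathsf{anch}$ exactly once and each $I\in K$ at most twice). $W_{\mathsf{seq}}$ is the set of collapsed $K$-interval words of type $\mathsf{seq}$. The automaton $A_{\mathsf{seq}}$: for $A$ as in the claim and a type $\mathsf{seq}=c_1\cdots c_m$, $A_{\mathsf{seq}}=(Q\times\{1,\dots,m+1\},(\mathsf{init},1),2^{\Sigma\cup K\cup\{\mathsf{anch}\}},\delta_{\mathsf{seq}},F\times\{m+1\})$ where, for $q\in Q$ and a letter $S$: for $1\le i\le m$, (i) if $c_i\in S$ then $\delta_{\mathsf{seq}}((q,i),S)=\delta(q,S)\times\{i+1\}$; (ii) if $c_i\notin S$ and $S\not\subseteq\Sigma$ then $\delta_{\mathsf{seq}}((q,i),S)=\emptyset$; (iii) if $S\subseteq\Sigma$ then $\delta_{\mathsf{seq}}((q,i),S)=\big(\delta(q,S)\cup\bigcup_{I'\in K_i}\delta(q,S\cup\{I'\})\big)\times\{i\}$, where $K_i=\{I'\in K:\exists i'<i\le i''\text{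 with }c_{i'}=c_{i''}=I'\}$; and $\delta_{\mathsf{seq}}((q,m+1),S)=\delta(q,S)\times\{m+1\}$ if $S\subseteq\Sigma$ and $\emptyset$ otherwise. *)

(* Defs.v *)
From mathcomp Require Import all_boot.
Set Implicit Arguments. Unset Strict Implicit. Unset Printing Implicit Defensive.

(* Symbols of Sigma ∪ K ∪ {anch}: inl p = proposition p, inr (inl I) = interval I,
   inr (inr tt) = anch.  K is any finite type of (interval) labels. *)
Definition Sym (Sig K : finType) : finType := (Sig + (K + unit))%type.

Section Defs.
Variables (Sig K : finType).
Notation Sym := (Sym Sig K).
Notation letter := {set Sym}.

Definition sProp (p : Sig) : Sym := inl p.
Definition sInt (I : K) : Sym := inr (inl I).
Definition sAnch : Sym := inr (inr tt).

Definition is_sigma (x : Sym) : bool := if x is inl _ then true else false.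
Definition SigmaSet : letter := [set x | is_sigma x].
Definition KSet : letter := [set sInt I | I : K].
Definition Kpart (a : letter) : {set K} := [set I | sInt I \in a].

(* positions are 0-indexed *)
Definition at_ (w : seq letter) (j : nat) : letter := nth set0 w j.

Definition interval_word (w : seq letter) : bool :=
  (count (fun a : letter => sAnch \in a) w == 1) &&
  all (fun a : letter => (sAnch \in a) ==> (Kpart a == set0)) w.

Definition collapsed (w : seq letter) : bool :=
  all (fun a : letter => #|Kpart a| <= 1) w.

Definition restricted_pos (w : seq letter) (I : K) : seq nat :=
  [seq j <- iota 0 (size w) | sInt I \in at_ w j].

(* first / last I-time restricted positions; None stands for ⊥ *)
Definition first (w : seq letter) (I : K) : option nat := ohead (restricted_pos w I).
Definition last_ (w : seq letter) (I : K) : option nat :=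
  if restricted_pos w I is j :: s then Some (last j s) else None.

Definition Norm (w : seq letter) : seq letter :=
  [seq (at_ w j :\: KSet) :|:
       [set sInt I | I in [pred I | (first w I == Some j) || (last_ w I == Some j)]]
  | j <- iota 0 (size w)].

Definition is_boundary (w : seq letter) (j : nat) : bool :=
  (sAnch \in at_ w j) || [exists I : K, (first w I == Some j) || (last_ w I == Some j)].

(* the type of a (collapsed interval) word, as a word over K ∪ {anch} ⊆ Sym *)
Definition type_of (w : seq letter) : seq Sym :=
  [seq odflt sAnch [pick x in at_ w p :\: SigmaSet]
  | p <- iota 0 (size w) & is_boundary w p].

Definition is_type (s : seq Sym) : Prop :=
  exists w, [/\ interval_word w, collapsed w & type_of w = s].

Definition W_seq (s : seq Sym) (w : seq letter) : bool :=
  [&& interval_word w, collapsed w & type_of w == s].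

Record nfa (Q : finType) := Nfa {
  n_init : Q;
  n_delta : Q -> letter -> {set Q};
  n_final : {set Q} }.

Fixpoint reach (Q : finType) (A : nfa Q) (X : {set Q}) (w : seq letter) : {set Q} :=
  if w is a :: w' then reach A (\bigcup_(q in X) n_delta A q a) w' else X.

Definition accepts (Q : finType) (A : nfa Q) (w : seq letter) : bool :=
  [exists q in reach A [set n_init A] w, q \in n_final A].

(* The automaton A_seq.  Paper index i ∈ {1..m+1} is represented by i-1 : 'I_(m+1);
   c_i is nth sAnch s (i-1). *)
Section Aseq.
Variables (Q : finType) (A : nfa Q) (s : seq Sym).
Let m := size s.
Let c (j : nat) : Sym := nth sAnch s j.

(* K_i for paper index i = j+1 : exists i' < i <= i'' with c_i' = c_i'' = I *)
Definition Kidx (j : nat) : {set K} :=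
  [set I | [exists j1 : 'I_m, [exists j2 : 'I_m,
     [&& j1 < j, j <= j2, c j1 == sInt I & c j2 == sInt I]]]].

Definition delta_seq (x : (Q * 'I_(m.+1))%type) (S : letter) : {set (Q * 'I_(m.+1))%type} :=
  let q := x.1 in let j := val x.2 in
  if j < m then
    if c j \in S then [set y | (y.1 \in n_delta A q S) && (val y.2 == j.+1)]
    else if ~~ (S \subset SigmaSet) then set0
    else [set y | ((y.1 \in n_delta A q S) ||
                   [exists I in Kidx j, y.1 \in n_delta A q (sInt I |: S)])
                  && (val y.2 == j)]
  else if S \subset SigmaSet then [set y | (y.1 \in n_delta A q S) && (val y.2 == m)]
  else set0.

Definition A_seq : nfa ((Q * 'I_(m.+1))%type) :=
  Nfa (n_init A, ord0) delta_seq [set y | (y.1 \in n_final A) && (y.2 == ord_max)].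
End Aseq.

End Defs.

(* Main.v *)
Require Import Defs.
From mathcomp Require Import all_boot zify.
Set Implicit Arguments. Unset Strict Implicit. Unset Printing Implicit Defensive.

Section Proof.
Variables (Sig K : finType).
Local Notation Sym := (Sym Sig K).
Local Notation letter := {set Sym}.
Local Notation anch := (sAnch Sig K).
Local Notation sI := (@sInt Sig K).

Lemma path_last_ge (j : nat) (s : seq nat) :
  path ltn j s -> forall x, x \in j :: s -> x <= last j s.
Proof.
elim: s j => [|y s IH] j /=.
  by move=> _ x; rewrite inE => /eqP ->.
move=> /andP [ljy py] x; rewrite inE => /orP [/eqP ->|xs].
  apply: leq_trans (ltnW ljy) _; exact: IH py y (mem_head _ _).
exact: IH.
Qed.

Lemma head_filter_iota (P : pred nat) n f :
  ohead [seq j <- iota 0 n | P j] = Some f ->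
  [/\ f < n, P f & forall p, p < n -> P p -> f <= p].
Proof.
have so : sorted ltn [seq j <- iota 0 n | P j].
  by apply: sorted_filter; [exact: ltn_trans|exact: iota_ltn_sorted].
have mf : forall x, x \in [seq j <- iota 0 n | P j] = (x < n) && P x.
  by move=> x; rewrite mem_filter mem_iota /= add0n andbC.
case E: [seq j <- iota 0 n | P j] so mf => [|h t] //= so mf [<-].
have := mf h; rewrite mem_head => /esym/andP [hn Ph]; split => // p pn Pp.
have : p \in h :: t by rewrite mf pn.
rewrite inE => /orP [/eqP -> //|pt].
have := order_path_min ltn_trans so => /allP /(_ _ pt); exact: ltnW.
Qed.

Lemma last_filter_iota (P : pred nat) n l :
  (if [seq j <- iota 0 n | P j] is j :: s then Some (last j s) else None) = Some l ->
  [/\ l < n, P l & forall p, p < n -> P p -> p <= l].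
Proof.
have so : sorted ltn [seq j <- iota 0 n | P j].
  by apply: sorted_filter; [exact: ltn_trans|exact: iota_ltn_sorted].
have mf : forall x, x \in [seq j <- iota 0 n | P j] = (x < n) && P x.
  by move=> x; rewrite mem_filter mem_iota /= add0n andbC.
case E: [seq j <- iota 0 n | P j] so mf => [|h t] //= so mf [<-].
have lin : last h t \in h :: t by exact: mem_last.
have := mf (last h t); rewrite lin => /esym/andP [hn Ph]; split => // p pn Pp.
apply: path_last_ge so _ _; by rewrite mf pn.
Qed.

Lemma filter_iota_ne (P : pred nat) n p : p < n -> P p ->
  [seq j <- iota 0 n | P j] <> [::].
Proof.
move=> pn Pp E.
have : p \in [seq j <- iota 0 n | P j] by rewrite mem_filter Pp mem_iota.
by rewrite E.
Qed.

Lemma at_oob (w : seq letter) p : size w <= p -> at_ w p = set0.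
Proof. by move=> h; rewrite /at_ nth_default. Qed.

Definition occ (w : seq letter) I p := sI I \in at_ w p.

Lemma occ_lt w I p : occ w I p -> p < size w.
Proof. rewrite /occ; case: ltnP => // h; by rewrite at_oob // inE. Qed.

Lemma first_spec w I f : first w I = Some f ->
  [/\ f < size w, occ w I f & forall p, occ w I p -> f <= p].
Proof.
move=> /head_filter_iota [h1 h2 h3]; split => // p op.
exact: h3 (occ_lt op) op.
Qed.

Lemma last_spec w I l : last_ w I = Some l ->
  [/\ l < size w, occ w I l & forall p, occ w I p -> p <= l].
Proof.
rewrite /last_ /restricted_pos => /last_filter_iota [h1 h2 h3]; split => // p op.
exact: h3 (occ_lt op) op.
Qed.

Lemma first_ex w I p : occ w I p -> exists f, first w I = Some f.
Proof.
move=> op; rewrite /first /restricted_pos.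
case E: [seq j <- iota 0 (size w) | sI I \in at_ w j] => [|h t]; last by exists h.
by have := filter_iota_ne (occ_lt op) op.
Qed.

Lemma last_ex w I p : occ w I p -> exists l, last_ w I = Some l.
Proof.
move=> op; rewrite /last_ /restricted_pos.
case E: [seq j <- iota 0 (size w) | sI I \in at_ w j] => [|h t]; last by eexists.
by have := filter_iota_ne (occ_lt op) op.
Qed.


Lemma nonsig_cases (x : Sym) : ~~ is_sigma x -> x = anch \/ exists I, x = sI I.
Proof. by case: x => [//|[I|[]]] _; [right; exists I|left]. Qed.

Lemma anch_noK v p I : interval_word v -> anch \in at_ v p -> sI I \in at_ v p -> False.
Proof.
case/andP => _ /allP al ha hi.
have pv : p < size v by move: hi; case: ltnP => // h; rewrite at_oob // inE.
have := al _ (mem_nth set0 pv); rewrite -/(at_ v p) ha /= => /eqP.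
move=> /setP /(_ I); by rewrite /Kpart !inE hi.
Qed.

Lemma coll_eq v p I J : collapsed v -> sI I \in at_ v p -> sI J \in at_ v p -> I = J.
Proof.
move=> /allP al hi hj.
have pv : p < size v by move: hi; case: ltnP => // h; rewrite at_oob // inE.
have := al _ (mem_nth set0 pv); rewrite -/(at_ v p) => /card_le1P.
have hI : I \in Kpart (at_ v p) by rewrite inE.
have hJ : J \in Kpart (at_ v p) by rewrite inE.
by move=> /(_ I hI J); rewrite hJ => /esym /eqP.
Qed.

Definition label (a : letter) : Sym := odflt anch [pick x in a :\: SigmaSet Sig K].

Lemma label_eq (a : letter) y : y \in a -> ~~ is_sigma y ->
  (forall x, x \in a -> ~~ is_sigma x -> x = y) -> label a = y.
Proof.
move=> ya ny h; rewrite /label; case: pickP => [x|] /=.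
  by rewrite !inE => /andP [nx xa]; exact: h.
by move=> /(_ y); rewrite !inE ya ny.
Qed.

Lemma label_nonsig a : ~~ is_sigma (label a).
Proof. rewrite /label; case: pickP => [x|] //=; by rewrite !inE => /andP []. Qed.

Lemma label_mem a y : label a = y -> y <> anch -> y \in a.
Proof.
rewrite /label; case: pickP => [x|] /=.
  by rewrite !inE => /andP [_ xa] <-.
by move=> _ <-.
Qed.

Lemma type_ofE w : type_of w = [seq label (at_ w p) | p <- iota 0 (size w) & is_boundary w p].
Proof. by []. Qed.

Lemma T1 s : is_type s -> forall j, ~~ is_sigma (nth anch s j).
Proof.
move=> [w [_ _ <-]] j; case: (ltnP j (size (type_of w))) => h; last by rewrite nth_default.
have := mem_nth anch h; rewrite type_ofE => /mapP [p _ ->]; exact: label_nonsig.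
Qed.

Lemma T2 s : is_type s -> forall a b c I, a < b -> b < c -> c < size s ->
  nth anch s a = sI I -> nth anch s b = sI I -> nth anch s c = sI I -> False.
Proof.
move=> [w [iw cw <-]] a b c I ab bc cs.
rewrite type_ofE in cs *.
set P := [seq p <- iota 0 (size w) | is_boundary w p] in cs *.
rewrite size_map in cs.
have bs : b < size P by apply: ltn_trans bc cs.
have as_ : a < size P by apply: ltn_trans ab bs.
rewrite !(nth_map 0) //.
have so : sorted ltn P by apply: sorted_filter; [exact: ltn_trans|exact: iota_ltn_sorted].
have inc := sorted_ltn_nth ltn_trans 0 so.
have hab : nth 0 P a < nth 0 P b by apply: inc.
have hbc : nth 0 P b < nth 0 P c by apply: inc.
have : nth 0 P b \in P by exact: mem_nth.
rewrite mem_filter => /andP [bb _].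
move=> /label_mem ha /label_mem hb /label_mem hc.
have nA : sI I <> anch by [].
have {}ha := ha nA; have {}hb := hb nA; have {}hc := hc nA.
move: bb; rewrite /is_boundary => /orP [/anch_noK -/(_ I iw hb) //|/existsP [J /orP [] /eqP H]].
  have [_ oJ _] := first_spec H; have eJ := coll_eq cw hb oJ; subst J.
  have [_ _ m] := first_spec H; have := m _ ha; by rewrite leqNgt hab.
have [_ oJ _] := last_spec H; have eJ := coll_eq cw hb oJ; subst J.
have [_ _ m] := last_spec H; have := m _ hc; by rewrite leqNgt hbc.
Qed.


Lemma inKSet x : x \in KSet Sig K -> exists I, x = sI I.
Proof. by move=> /imsetP [I _ ->]; exists I. Qed.

Lemma mem_Normlet (a : letter) (P : pred K) x :
  x \in (a :\: KSet Sig K) :|: [set sI I | I in P] =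
  match x with inr (inl J) => P J | _ => x \in a end.
Proof.
case: x => [σ|[J|[]]]; rewrite in_setU in_setD.
- case: (boolP (inl σ \in KSet Sig K)) => [/inKSet [I //]|_].
  case: (boolP (inl σ \in [set sI I | I in P])) => [/imsetP [I _ //]|_].
  by rewrite orbF.
- have -> : (inr (inl J) \in KSet Sig K) = true by apply/imsetP; exists J.
  apply/imsetP/idP => [[I PI [->]] //|PJ]; by exists J.
- case: (boolP (_ \in KSet Sig K)) => [/inKSet [I //]|_].
  case: (boolP (_ \in [set sI I | I in P])) => [/imsetP [I _ //]|_].
  by rewrite orbF.
Qed.

Lemma Kidx_P s j I : I \in Kidx s j -> exists j1 j2,
  [/\ j1 < j, j <= j2, j2 < size s, nth anch s j1 = sI I & nth anch s j2 = sI I].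
Proof.
rewrite /Kidx inE => /existsP [j1 /existsP [j2 /and4P [h1 h2 /eqP h3 /eqP h4]]].
by exists j1, j2; split.
Qed.

Lemma Kidx_I s j I j1 j2 : j1 < j -> j <= j2 -> j2 < size s ->
  nth anch s j1 = sI I -> nth anch s j2 = sI I -> I \in Kidx s j.
Proof.
move=> h1 h2 h3 h4 h5; rewrite /Kidx inE.
have h1' : j1 < size s by apply: leq_ltn_trans h3; apply: leq_trans (ltnW h1) h2.
apply/existsP; exists (Ordinal h1'); apply/existsP; exists (Ordinal h3).
by rewrite /= h1 h2 h4 h5 !eqxx.
Qed.

Definition step (s : seq Sym) (a b : letter) (j j' : nat) : Prop :=
  (j < size s /\ nth anch s j \in a /\ b = a /\ j' = j.+1) \/
  (a \subset SigmaSet Sig K /\ j' = j /\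
     (b = a \/ (j < size s /\ exists2 I, I \in Kidx s j & b = sI I |: a))).

Lemma mono_jf (jf : nat -> nat) n : (forall p, p < n -> jf p <= jf p.+1) ->
  forall p p', p <= p' -> p' <= n -> jf p <= jf p'.
Proof.
move=> h p p'; elim: p' => [|p' IH]; first by rewrite leqn0 => /eqP ->.
rewrite leq_eqVlt => /orP [/eqP -> //|pp] pn.
apply: leq_trans (IH pp (ltnW pn)) (h _ pn).
Qed.

Lemma ivt_jf (jf : nat -> nat) n :
  (forall p, p < n -> jf p.+1 = jf p \/ jf p.+1 = (jf p).+1) ->
  forall k, jf 0 <= k -> k < jf n -> exists p, [/\ p < n, jf p = k & jf p.+1 = k.+1].
Proof.
elim: n => [|n IH] h k h0 hn; first by move: hn; rewrite ltnNge h0.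
case: (ltnP k (jf n)) => kn.
  have [|p [p1 p2 p3]] := IH _ k h0 kn; first by move=> p pn; apply: h; apply: ltnW.
  by exists p; split => //; apply: ltnW.
exists n; have [e|e] := h n (ltnSn n); rewrite e in hn.
  by move: hn; rewrite ltnNge kn.
have ek : jf n = k by apply/eqP; rewrite eqn_leq kn -ltnS.
by rewrite ek in e; split.
Qed.


Section C2.
Variables (s : seq Sym) (w v : seq letter) (jf : nat -> nat).
Hypotheses (iw : interval_word v) (cw : collapsed v) (sz : size v = size w).
Hypothesis hs : forall p, p < size w -> step s (at_ w p) (at_ v p) (jf p) (jf p.+1).
Hypotheses (j0 : jf 0 = 0) (jn : jf (size w) = size s).
Hypothesis t1 : forall j, ~~ is_sigma (nth anch s j).
Hypothesis t2 : forall a b c I, a < b -> b < c -> c < size s ->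
  nth anch s a = sI I -> nth anch s b = sI I -> nth anch s c = sI I -> False.

Let n := size w.

Lemma st01 p : p < n -> jf p.+1 = jf p \/ jf p.+1 = (jf p).+1.
Proof. by move=> /hs [[_ [_ [_ ->]]]|[_ [-> _]]]; [right|left]. Qed.

Lemma st_le p : p < n -> jf p <= jf p.+1.
Proof. by move=> /st01 [->|->]. Qed.

Lemma monoC p p' : p <= p' -> p' <= n -> jf p <= jf p'.
Proof. exact: (mono_jf (n:=n) st_le). Qed.

Lemma inc_case p : p < n -> jf p.+1 = (jf p).+1 ->
  [/\ jf p < size s, nth anch s (jf p) \in at_ w p & at_ v p = at_ w p].
Proof.
move=> /hs [[h1 [h2 [h3 _]]] //|[_ [-> _]] e].
by have := n_Sn (jf p); rewrite -e.
Qed.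

Lemma stay_case p : p < n -> jf p.+1 <> (jf p).+1 ->
  [/\ jf p.+1 = jf p, at_ w p \subset SigmaSet Sig K &
   (at_ v p = at_ w p \/ (jf p < size s /\ exists2 I, I \in Kidx s (jf p) & at_ v p = sI I |: at_ w p))].
Proof. by move=> /hs [[_ [_ [_ ->]]] //|[h1 [h2 h3]] _]. Qed.

Lemma nonsig_inc p : p < n -> jf p.+1 = (jf p).+1 ->
  forall x, x \in at_ v p -> ~~ is_sigma x -> x = nth anch s (jf p).
Proof.
move=> pn e x xv nx; have [_ cw' ev] := inc_case pn e.
rewrite -ev in cw'.
have [xa|[J xJ]] := nonsig_cases nx; subst x.
  have [ca|[I cI]] := nonsig_cases (t1 (jf p)); rewrite ?ca ?cI in cw' * => //.
  by case: (anch_noK iw xv cw').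
have [ca|[I cI]] := nonsig_cases (t1 (jf p)); rewrite ?ca ?cI in cw' *.
  by case: (anch_noK iw cw' xv).
by rewrite (coll_eq cw xv cw').
Qed.

Lemma sig_notK (a : letter) I : a \subset SigmaSet Sig K -> sI I \in a -> False.
Proof. by move=> /subsetP h /h; rewrite inE. Qed.

Lemma sig_notA (a : letter) : a \subset SigmaSet Sig K -> anch \in a -> False.
Proof. by move=> /subsetP h /h; rewrite inE. Qed.

Lemma occ_idx p I : p < n -> occ v I p ->
  (jf p.+1 = (jf p).+1 /\ nth anch s (jf p) = sI I) \/
  (jf p.+1 = jf p /\ exists j1 j2,
    [/\ j1 < jf p, jf p <= j2, j2 < size s, nth anch s j1 = sI I & nth anch s j2 = sI I]).
Proof.
move=> pn op; case: (eqVneq (jf p.+1) (jf p).+1) => e.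
  left; split => //; symmetry; apply: nonsig_inc => //.
have [e1 sub [ev|[_ [J JK ev]]]] := stay_case pn (elimN eqP e).
  by move: op; rewrite /occ ev => /(sig_notK sub).
move: op; rewrite /occ ev => /setU1P [[eJ]|/(sig_notK sub) //]; subst J.
by right; split => //; apply: Kidx_P.
Qed.

Lemma inc_pos k : k < size s -> exists p, [/\ p < n, jf p = k & jf p.+1 = k.+1].
Proof. move=> ks; apply: ivt_jf => //; [exact: st01|by rewrite j0|by rewrite jn]. Qed.

Lemma occ_of_inc p I : p < n -> jf p.+1 = (jf p).+1 -> nth anch s (jf p) = sI I -> occ v I p.
Proof. by move=> pn e c; have [_ h ev] := inc_case pn e; rewrite /occ ev -c. Qed.

Lemma claimF p I : p < n -> jf p.+1 = (jf p).+1 -> nth anch s (jf p) = sI I ->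
  first v I = Some p \/ last_ v I = Some p.
Proof.
move=> pn e c; have op := occ_of_inc pn e c.
have [f ef] := first_ex op; have [l el] := last_ex op.
have [fs of_ fm] := first_spec ef; have [ls ol lm] := last_spec el.
have fp := fm _ op; have pl := lm _ op.
rewrite sz in fs ls.
case: (eqVneq f p) => [<-|nfp]; first by left.
case: (eqVneq l p) => [<-|nlp]; first by right.
have fp' : f < p by rewrite ltn_neqAle nfp.
have pl' : p < l by rewrite ltn_neqAle eq_sym nlp.
have [a [ha ca]] : exists a, a < jf p /\ nth anch s a = sI I.
  have [[ef1 cf]|[_ [j1 [j2 [h1 h2 _ h4 _]]]]] := occ_idx fs of_.
    exists (jf f); split => //; rewrite -ltnS -ef1 ltnS; apply: monoC => //; exact: ltnW.
  exists j1; split => //; apply: leq_trans h1 _; apply: monoC => //; exact: ltnW.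
have [b [hb bs cb]] : exists b, [/\ (jf p).+1 <= b, b < size s & nth anch s b = sI I].
  have [[el1 cl]|[_ [j1 [j2 [h1 h2 h3 _ h5]]]]] := occ_idx ls ol.
    exists (jf l); split => //; last by have [] := inc_case ls el1.
    by rewrite -e; apply: monoC => //; exact: ltnW.
  exists j2; split => //; apply: leq_trans h2; rewrite -e; apply: monoC => //; exact: ltnW.
by case: (t2 ha hb bs ca c cb).
Qed.

Lemma stay_not_bnd p I j1 j2 : p < n -> jf p.+1 = jf p ->
  j1 < jf p -> jf p <= j2 -> j2 < size s -> nth anch s j1 = sI I -> nth anch s j2 = sI I ->
  first v I <> Some p /\ last_ v I <> Some p.
Proof.
move=> pn e h1 h2 h3 c1 c2.
have j1s : j1 < size s by apply: leq_ltn_trans h3; apply: leq_trans (ltnW h1) h2.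
have [p1 [p1n jp1 jp1']] := inc_pos j1s.
have [p2 [p2n jp2 jp2']] := inc_pos h3.
have o1 : occ v I p1 by apply: occ_of_inc => //; rewrite jp1 // jp1'.
have o2 : occ v I p2 by apply: occ_of_inc => //; rewrite jp2 // jp2'.
split => H.
  have [_ _ m] := first_spec H; have := m _ o1 => pp1.
  have := monoC pp1 (ltnW p1n); rewrite jp1 => hh.
  by have := leq_trans h1 hh; rewrite ltnn.
have [_ _ m] := last_spec H; have := m _ o2 => p2p.
case: (eqVneq p2 p) => [ep|np].
  subst p2; rewrite e jp2 in jp2'; exact: (n_Sn _ jp2').
have p2p' : p2.+1 <= p by rewrite ltn_neqAle np p2p.
have := monoC p2p' (ltnW pn); rewrite jp2' => hh.
by have := leq_trans hh h2; rewrite ltnn.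
Qed.

Lemma bnd_inc p : p < n -> is_boundary v p = (jf p.+1 == (jf p).+1).
Proof.
move=> pn; case: (eqVneq (jf p.+1) (jf p).+1) => e.
  rewrite /is_boundary; have [_ cw' ev] := inc_case pn e.
  have [ca|[I cI]] := nonsig_cases (t1 (jf p)).
    by rewrite ev -ca cw'.
  have [H|H] := claimF pn e cI; apply/orP; right; apply/existsP; exists I; by rewrite H eqxx ?orbT.
have [e1 sub oth] := stay_case pn (elimN eqP e).
apply/negbTE; rewrite /is_boundary negb_or; apply/andP; split.
  case: oth => [->|[_ [J _ ->]]]; apply/negP; first exact: sig_notA sub.
  by move=> /setU1P [//|/(sig_notA sub)].
apply/existsP => [[I /orP [] /eqP H]].
- have [_ op _] := first_spec H.
  have [[e2 _]|[_ [j1 [j2 [h1 h2 h3 c1 c2]]]]] := occ_idx pn op.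
    by rewrite e2 in e1; exact: (n_Sn _ (esym e1)).
  by have [] := stay_not_bnd pn e1 h1 h2 h3 c1 c2.
- have [_ op _] := last_spec H.
  have [[e2 _]|[_ [j1 [j2 [h1 h2 h3 c1 c2]]]]] := occ_idx pn op.
    by rewrite e2 in e1; exact: (n_Sn _ (esym e1)).
  by have [] := stay_not_bnd pn e1 h1 h2 h3 c1 c2.
Qed.

Lemma label_inc p : p < n -> jf p.+1 = (jf p).+1 -> label (at_ v p) = nth anch s (jf p).
Proof.
move=> pn e; have [_ cw' ev] := inc_case pn e.
apply: label_eq; [by rewrite ev|exact: t1|exact: nonsig_inc].
Qed.

Lemma count_map l : l <= n ->
  [seq nth anch s (jf p) | p <- iota 0 l & jf p.+1 == (jf p).+1] =
  [seq nth anch s k | k <- iota 0 (jf l)].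
Proof.
elim: l => [|l IH] ln; first by rewrite j0.
have -> : iota 0 l.+1 = iota 0 l ++ [:: l] by rewrite -addn1 iotaD.
rewrite filter_cat map_cat IH ?(ltnW ln) //=.
have [e|e] := st01 ln.
  by rewrite e eqn_leq ltnn andbF /= cats0.
have -> : iota 0 (jf l.+1) = iota 0 (jf l) ++ [:: jf l] by rewrite e -addn1 iotaD.
by rewrite e eqxx map_cat.
Qed.

Lemma type_eq : type_of v = s.
Proof.
rewrite type_ofE sz.
rewrite (@eq_in_filter _ _ (fun p => jf p.+1 == (jf p).+1)); last first.
  by move=> p; rewrite mem_iota add0n /= => pn; exact: bnd_inc.
set F := filter _ _.
have -> : [seq label (at_ v p) | p <- F] = [seq nth anch s (jf p) | p <- F].
  apply/eq_in_map => p; rewrite mem_filter mem_iota add0n /= => /andP [/eqP e pn]; exact: label_inc.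
by rewrite count_map // jn; exact: mkseq_nth.
Qed.

Lemma norm_eq : Norm v = w.
Proof.
apply: (@eq_from_nth _ set0); first by rewrite size_map size_iota sz.
rewrite size_map size_iota sz => p pn.
rewrite (nth_map 0) ?size_iota ?sz // nth_iota ?sz // add0n.
apply/setP => x; rewrite mem_Normlet -/(at_ w p).
case: (eqVneq (jf p.+1) (jf p).+1) => e.
  have [_ cw' ev] := inc_case pn e.
  case: x => [σ|[J|[]]]; rewrite ?ev //.
  apply/idP/idP => [/orP [/eqP H|/eqP H]|H].
  - have [a1 a2 a3] := first_spec H.
    by rewrite -ev; exact: a2.
  - by have [a1 a2 a3] := last_spec H; rewrite -ev; exact: a2.
  - rewrite -ev in H; have c := nonsig_inc pn e H isT.
    by have [H'|H'] := claimF pn e (esym c); rewrite /= H' eqxx ?orbT.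
have [e1 sub oth] := stay_case pn (elimN eqP e).
case: x => [σ|[J|[]]].
- by case: oth => [->|[_ [I _ ->]]] //; rewrite in_setU1.
- have -> : (sI J \in at_ w p) = false by apply/negP => /(sig_notK sub).
  apply/negP => H.
  have : is_boundary v p by rewrite /is_boundary; apply/orP; right; apply/existsP; exists J.
  by rewrite bnd_inc // (negbTE e).
- by case: oth => [->|[_ [I _ ->]]] //; rewrite in_setU1.
Qed.

End C2.

Section C1.
Variables (v : seq letter).
Hypotheses (iw : interval_word v) (cw : collapsed v).

Local Notation bnd := (is_boundary v).
Definition jfc p := count bnd (iota 0 p).

Lemma jfc_S p : jfc p.+1 = jfc p + bnd p.
Proof. by rewrite /jfc -addn1 iotaD count_cat /= addn0. Qed.

Lemma jfc_mono p p' : p <= p' -> jfc p <= jfc p'.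
Proof. by move=> h; rewrite /jfc -(subnKC h) iotaD count_cat leq_addr. Qed.

Lemma jfc_n : jfc (size v) = size (type_of v).
Proof. by rewrite type_ofE size_map size_filter. Qed.

Lemma nth_type p : p < size v -> bnd p -> nth anch (type_of v) (jfc p) = label (at_ v p).
Proof.
move=> pn b; rewrite type_ofE.
have -> : iota 0 (size v) = iota 0 p ++ p :: iota p.+1 (size v - p.+1).
  by rewrite -[p :: _]/(iota p (size v - p.+1).+1) subnSK // -iotaD subnKC // ltnW.
rewrite filter_cat map_cat nth_cat size_map size_filter /jfc ltnn subnn /= b.
by [].
Qed.

Lemma norm_at p : p < size v -> at_ (Norm v) p =
  (at_ v p :\: KSet Sig K) :|: [set sI I | I in [pred I | (first v I == Some p) || (last_ v I == Some p)]].
Proof. by move=> pn; rewrite /at_ /Norm (nth_map 0) ?size_iota // nth_iota. Qed.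

Lemma notbnd_P p J : ~~ bnd p -> (first v J == Some p) || (last_ v J == Some p) = false.
Proof.
move=> nb; apply/negbTE/negP => H; move: nb; rewrite /is_boundary negb_or => /andP [_].
by move=> /negP; apply; apply/existsP; exists J.
Qed.

Lemma bnd_norm p : p < size v -> bnd p -> at_ (Norm v) p = at_ v p.
Proof.
move=> pn b; apply/setP => x; rewrite norm_at // mem_Normlet.
case: x => [σ|[J|[]]] //=.
apply/idP/idP => [/orP [/eqP H|/eqP H]|H].
- by have [a1 a2 a3] := first_spec H.
- by have [a1 a2 a3] := last_spec H.
move: b; rewrite /is_boundary => /orP [/anch_noK -/(_ J iw H) //|/existsP [I /orP [] /eqP HI]].
- have [a1 a2 a3] := first_spec HI; have eJ := coll_eq cw H a2; subst I; by rewrite HI eqxx.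
- have [a1 a2 a3] := last_spec HI; have eJ := coll_eq cw H a2; subst I; by rewrite HI eqxx orbT.
Qed.

Lemma label_in p : bnd p -> label (at_ v p) \in at_ v p.
Proof.
rewrite /label /is_boundary; case: pickP => [x|none] /=; first by rewrite !inE => /andP [].
move=> /orP [ha|/existsP [I /orP [] /eqP H]].
- by have := none anch; rewrite !inE ha.
- have [a1 a2 a3] := first_spec H; move: a2; rewrite /occ => a2.
  by have := none (sI I); rewrite !inE a2.
- have [a1 a2 a3] := last_spec H; move: a2; rewrite /occ => a2.
  by have := none (sI I); rewrite !inE a2.
Qed.

Lemma label_K f I : occ v I f -> label (at_ v f) = sI I.
Proof.
move=> o; apply: label_eq => // x xv nx.
have [xa|[J xJ]] := nonsig_cases nx; subst x.
  by case: (anch_noK iw xv o).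
by rewrite (coll_eq cw xv o).
Qed.

Lemma C1_step p : p < size (Norm v) ->
  step (type_of v) (at_ (Norm v) p) (at_ v p) (jfc p) (jfc p.+1).
Proof.
rewrite size_map size_iota => pn.
have jfn : jfc p.+1 <= size (type_of v) by rewrite -jfc_n; apply: jfc_mono.
case: (boolP (bnd p)) => b.
  left; rewrite jfc_S b addn1 in jfn *; split; first by [].
  rewrite nth_type // bnd_norm //; split; [exact: label_in|split=> //].
right; rewrite jfc_S (negbTE b) addn0; split; [|split=> //].
  apply/subsetP => x; rewrite norm_at // mem_Normlet.
  case: x => [σ|[J|[]]]; first by rewrite inE.
    by rewrite /= notbnd_P.
  move=> ha; move: b; by rewrite /is_boundary ha.
case: (pickP (fun J => sI J \in at_ v p)) => [J hJ|none].
  right.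
  have [f ef] := first_ex hJ; have [l el] := last_ex hJ.
  have [fs of_ fm] := first_spec ef; have [ls ol lm] := last_spec el.
  have fp := fm _ hJ; have pl := lm _ hJ.
  have bf : bnd f by rewrite /is_boundary; apply/orP; right; apply/existsP; exists J; rewrite ef eqxx.
  have bl : bnd l by rewrite /is_boundary; apply/orP; right; apply/existsP; exists J; rewrite el eqxx orbT.
  have nfp : f != p by apply/eqP => E; subst f; rewrite bf in b.
  have nlp : l != p by apply/eqP => E; subst l; rewrite bl in b.
  have fp' : f.+1 <= p by rewrite ltn_neqAle nfp.
  have pl' : p <= l by [].
  have ls' : jfc l < size (type_of v).
    by rewrite -jfc_n; apply: leq_trans (jfc_mono ls); rewrite jfc_S bl addn1.
  split; first by apply: leq_ltn_trans ls'; apply: jfc_mono.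
  exists J.
    apply: (Kidx_I (j1:=jfc f) (j2:=jfc l)) => //.
    - by apply: leq_trans (jfc_mono fp'); rewrite jfc_S bf addn1.
    - exact: jfc_mono.
    - by rewrite nth_type // (label_K of_).
    - by rewrite nth_type // (label_K ol).
  apply/setP => x; rewrite in_setU1 norm_at // mem_Normlet.
  case: x => [σ|[J'|[]]] //.
  case: (eqVneq J' J) => [->|nJ]; first by rewrite eqxx hJ.
  rewrite /= notbnd_P //.
  have -> : (inr (inl J') == sI J) = false by apply/eqP => [[E]]; rewrite E eqxx in nJ.
  by apply/negP => H; rewrite (coll_eq cw H hJ) eqxx in nJ.
left; apply/setP => x; rewrite norm_at // mem_Normlet.
case: x => [σ|[J|[]]] //.
by rewrite /= notbnd_P // none.
Qed.

End C1.
End Proof.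

Section Auto.
Variables (Sig K Q : finType) (A : nfa Sig K Q).
Local Notation Sym := (Sym Sig K).
Local Notation letter := {set Sym}.
Local Notation anch := (sAnch Sig K).
Local Notation sI := (@sInt Sig K).

Lemma reach_gen (Q' : finType) (B : nfa Sig K Q') w : forall X q',
  q' \in reach B X w <-> exists2 q, q \in X & q' \in reach B [set q] w.
Proof.
elim: w => [|a w IH] X q' /=.
  split => [h|[q qX]]; first by exists q' => //; rewrite inE.
  by rewrite inE => /eqP ->.
rewrite IH; split => [[q1 /bigcupP [q qX q1d] h]|[q qX]].
  exists q => //; rewrite big_set1 IH; by exists q1.
rewrite big_set1 IH => [[q1 q1d h]]; exists q1 => //; apply/bigcupP; by exists q.
Qed.

Lemma run_cons (Q' : finType) (B : nfa Sig K Q') q a w q' :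
  q' \in reach B [set q] (a :: w) <-> exists2 q1, q1 \in n_delta B q a & q' \in reach B [set q1] w.
Proof. by rewrite /= big_set1 reach_gen. Qed.

Lemma ord_last n (i : 'I_n.+1) : (i < n) = false -> val i = n.
Proof. move=> h; apply/eqP; rewrite eqn_leq -ltnS ltn_ord /= leqNgt h. by []. Qed.

Lemma delta_seq_step s (x y : Q * 'I_(size s).+1) a :
  y \in delta_seq A x a ->
  exists2 b, y.1 \in n_delta A x.1 b & step s a b (val x.2) (val y.2).
Proof.
rewrite /delta_seq /=.
case: ifP => jm.
  case: ifP => cj.
    rewrite inE => /andP [h1 /eqP h2]; exists a; first exact: h1.
    by left; do !split.
  case: ifP => sub; first by rewrite inE.
  rewrite inE => /andP [/orP [h1|/existsP [I /andP [IK h1]]] /eqP h2].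
    exists a; first exact: h1.
    right; split; first by exact/negbFE.
    by split => //; left.
  exists (sI I |: a); first exact: h1.
  right; split; first by exact/negbFE.
  split => //; right; split => //; by exists I.
case: ifP => sub; last by rewrite inE.
rewrite inE => /andP [h1 /eqP h2]; exists a; first exact: h1.
right; split => //.
split; last by left. by rewrite h2 (ord_last jm).
Qed.

Lemma step_delta s (t1 : forall j, ~~ is_sigma (nth anch s j))
  (x y : Q * 'I_(size s).+1) a b :
  step s a b (val x.2) (val y.2) -> y.1 \in n_delta A x.1 b -> y \in delta_seq A x a.
Proof.
rewrite /delta_seq /= => st hd.
case: st => [[jm [cj [eb e]]]|[sub [e oth]]].
  by rewrite jm cj inE -eb hd e eqxx.
have cn : (nth anch s (val x.2) \in a) = false.
  apply/negP => /(subsetP sub); rewrite inE; by move: (t1 (val x.2)) => /negbTE ->.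
case: ifP => jm.
  rewrite cn sub /= inE e eqxx andbT.
  case: oth => [eb|[_ [I IK eb]]]; first by rewrite -eb hd.
  apply/orP; right; apply/existsP; exists I; by rewrite IK -eb.
rewrite sub inE e.
have -> : val x.2 = size s by exact: ord_last.
case: oth => [eb|[h _]]; first by rewrite -eb hd eqxx.
by rewrite h in jm.
Qed.

Lemma L1 (s : seq Sym) (w : seq letter) : forall (x x' : Q * 'I_(size s).+1), x' \in reach (A_seq A s) [set x] w ->
  exists v, exists jf : nat -> nat, [/\ size v = size w, jf 0 = val x.2, jf (size w) = val x'.2,
     (forall p, p < size w -> step s (at_ w p) (at_ v p) (jf p) (jf p.+1)) &
     x'.1 \in reach A [set x.1] v].
Proof.
elim: w => [|a w IH] x x'.
  rewrite /= inE => /eqP ->; exists [::], (fun _ => val x.2); split => //.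
  by rewrite inE.
move=> /run_cons [y hy hr].
have [v [jf [h1 h2 h3 h4 h5]]] := IH _ _ hr.
have [b hb st] := delta_seq_step hy.
exists (b :: v), (fun p => if p is p'.+1 then jf p' else val x.2); split => //=.
- by rewrite h1.
- case => [_|p pn] /=; first by rewrite /at_ /= h2.
  exact: h4.
- apply/run_cons; by exists y.1.
Qed.

Lemma step_bound (s : seq Sym) (a b : letter) j j' : step s a b j j' -> j < (size s).+1 -> j' < (size s).+1.
Proof. by case => [[h [_ [_ ->]]]|[_ [-> _]]]. Qed.

Lemma L2 (s : seq Sym) (t1 : forall j, ~~ is_sigma (nth anch s j)) (w : seq letter) : forall v (jf : nat -> nat) q'
  (x : Q * 'I_(size s).+1),
  val x.2 = jf 0 -> size v = size w ->
  (forall p, p < size w -> step s (at_ w p) (at_ v p) (jf p) (jf p.+1)) ->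
  q' \in reach A [set x.1] v ->
  exists x', [/\ x'.1 = q', val x'.2 = jf (size w) & x' \in reach (A_seq A s) [set x] w].
Proof.
elim: w => [|a w IH] [|b v] jf q' x // e0 sz hs.
  by rewrite inE => /eqP ->; exists x; split => //; rewrite inE.
move=> /run_cons [q1 hq1 hr].
have st0 : step s a b (jf 0) (jf 1) by exact: (hs 0).
have h0 : jf 0 < (size s).+1 by rewrite -e0; exact: ltn_ord.
have lt1 : jf 1 < (size s).+1 := step_bound st0 h0.
pose y : Q * 'I_(size s).+1 := (q1, Ordinal lt1).
have sz' : size v = size w by case: sz.
have hs' : forall p, p < size w -> step s (at_ w p) (at_ v p) (jf p.+1) (jf p.+2).
  by move=> p pn; exact: (hs p.+1).
have [x' [h1 h2 h3]] := IH v (fun p => jf p.+1) q' y erefl sz' hs' hr.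
exists x'; split => //; apply/run_cons; exists y => //.
by apply: (step_delta t1 (b:=b)); rewrite ?e0.
Qed.

Theorem lemma2_aux (hA : forall w, accepts A w -> interval_word w && collapsed w) :
  (forall s : seq Sym, is_type s ->
     forall w, accepts (A_seq A s) w <->
               exists2 v, accepts A v && W_seq s v & w = Norm v).
Proof.
move=> s ts w; split.
  move=> /existsP [x' /andP [hr]]; rewrite inE => /andP [hf /eqP hm].
  have [v [jf [sz j0 jn hs hv]]] := L1 hr.
  rewrite hm /= in jn.
  have av : accepts A v by apply/existsP; exists x'.1; rewrite hv hf.
  have /andP [iw cw] := hA _ av.
  have te := type_eq iw cw sz hs j0 jn (T1 ts) (T2 ts).
  have ne := norm_eq iw cw sz hs j0 jn (T1 ts) (T2 ts).
  exists v => //; by rewrite av /W_seq iw cw te eqxx.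
move=> [v /andP [/existsP [q' /andP [hq hf]] /and3P [iw cw /eqP te]] ->].
subst s.
have sz : size v = size (Norm v) by rewrite size_map size_iota.
have [x' [h1 h2 h3]] := L2 (T1 ts) (jf := jfc v) (x := (n_init A, ord0)) erefl sz (C1_step iw cw) hq.
apply/existsP; exists x'; rewrite h3 inE h1 hf /=.
apply/eqP/val_inj; rewrite h2 /= -sz; exact: jfc_n.
Qed.

End Auto.

Theorem lemma2 (Sig K Q : finType) (A : nfa Sig K Q) :
  (forall w, accepts A w -> interval_word w && collapsed w) ->
  (forall s : seq (Sym Sig K), is_type s ->
     forall w, accepts (A_seq A s) w <->
               exists2 v, accepts A v && W_seq s v & w = Norm v) /\
  (forall w, (exists2 s : seq (Sym Sig K), is_type s & accepts (A_seq A s) w) <->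
             exists2 v, accepts A v & w = Norm v).
Proof.
move=> hA; have P1 := lemma2_aux hA; split => // w; split.
  move=> [s ts acc]; have [v /andP [av _] e] := (P1 s ts w).1 acc; by exists v.
move=> [v av ->]; have /andP [iw cw] := hA _ av.
have ts : is_type (type_of v) by exists v.
exists (type_of v) => //; apply/(P1 _ ts); exists v => //.
by rewrite av /W_seq iw cw eqxx.
Qed.
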